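(* Let $F:\mathcal C\to\mathcal D$ be a pseudofunctor of bicategories. Then every extended formal diagram for $F$ commutes. Equivalently, for every map of graphs $H:G\to M$, every hom-category of the bicategory $\mathcal M(H)$ is thin.
   Context: Let $\mathbf{Pseudo}_1$ be the category of pseudofunctors $F:\mathcal C\to\mathcal D$ of bicategories with morphisms pairs of strict functors forming strictly commuting squares. The functor from $\mathbf{Pseudo}_1$ to the arrow category of directed graphs sending $F$ to the graph map $UF:U\mathcal C\to U\mathcal D$ (where $U$ takes 0-cells and 1-cells) has a left adjoint, sending a graph map $H:G\to M$ to a pseudofunctor $\Phi_H:\mathcal F(G)\to\mathcal M(H)$, where $\mathcal F(G)$ is the free bicategory on $G$. Its universal property: for every pseudofunctor $F:\mathcal C\to\mathcal D$ and every strictly commuting square of graph maps $g:G\to U\mathcal C$, $h:M\to U\mathcal D$ with $UF\circ g=h\circ H$, there are unique strict functors $\mathcal F(G)\to\mathcal C$ and $\mathcal M(H)\to\mathcal D$ extending $g$ and $h$ such that the resulting square with $\Phi_H$ and $F$ commutes strictly. (Concretely, 1-cells of $\mathcal M(H)$ are parenthesized composable words in formal units, edges of $M$, and terms $\Phi_H(w)$ with $w$ a 1-cell of $\mathcal F(G)$, where a term $\Phi_H(X)$ for a single edge $X$ of $G$ is identified with the edge $H(X)$ of $M$.) An extended formal diagram for $F$ is a diagram in $\mathcal D$ which is the image of a diagram in $\mathcal M(H)$ under the strict functor $\mathcal M(H)\to\mathcal D$ arising from some such square. *)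

(* Defs.v *)
Set Implicit Arguments.

Record graph := Graph {
  V : Type;
  E : Type;
  src : E -> V;
  tgt : E -> V }.

Record gmap (G M : graph) := GMap {
  hV : V G -> V M;
  hE : E G -> E M;
  hsrc : forall e, src M (hE e) = hV (src G e);
  htgt : forall e, tgt M (hE e) = hV (tgt G e) }.

(* (0-cells O, generating 1-cells X, generating 2-cells Y)             *)
Inductive word (O X : Type) : Type :=
| wid (a : O)
| wgen (x : X)
| wcomp (g f : word O X).          (* g after f *)

Inductive cell (O X Y : Type) : Type :=
| cid (w : word O X)
| cv (b a : cell O X Y)            (* vertical: b after a *)
| ch (b a : cell O X Y)            (* horizontal: b * a, b on the left *)
| ca (h g f : word O X)            (* (h g) f => h (g f) *)
| cai (h g f : word O X)
| cl (f : word O X)                (* id . f => f *)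
| cli (f : word O X)
| cr (f : word O X)                (* f . id => f *)
| cri (f : word O X)
| cgen (y : Y).

Arguments wid {O X}.
Arguments wgen {O X}.
Arguments wcomp {O X}.
Arguments cid {O X Y}.
Arguments cv {O X Y}.
Arguments ch {O X Y}.
Arguments ca {O X Y}.
Arguments cai {O X Y}.
Arguments cl {O X Y}.
Arguments cli {O X Y}.
Arguments cr {O X Y}.
Arguments cri {O X Y}.
Arguments cgen {O X Y}.

Section FreeBicat.
Variables (O X Y : Type).
Variable xty : X -> O -> O -> Prop.
Variable yty : Y -> O -> O -> word O X -> word O X -> Prop.
Variable rel : O -> O -> word O X -> word O X -> cell O X Y -> cell O X Y -> Prop.

Local Notation W := (word O X).
Local Notation C := (cell O X Y).

(* typing of 1-cells: wty w a b  means  w : a -> b *)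
Inductive wty : W -> O -> O -> Prop :=
| wty_id a : wty (wid a) a a
| wty_gen x a b : xty x a b -> wty (wgen x) a b
| wty_comp g f a b c : wty f a b -> wty g b c -> wty (wcomp g f) a c.

(* typing of 2-cells: cty a b al u v  means  al : u => v  in hom(a,b) *)
Inductive cty : O -> O -> C -> W -> W -> Prop :=
| cty_id a b w : wty w a b -> cty a b (cid w) w w
| cty_v a b al be u v w :
    cty a b al u v -> cty a b be v w -> cty a b (cv be al) u w
| cty_h a b c al be f f' g g' :
    cty a b al f f' -> cty b c be g g' ->
    cty a c (ch be al) (wcomp g f) (wcomp g' f')
| cty_a a b c d h g f : wty f a b -> wty g b c -> wty h c d ->
    cty a d (ca h g f) (wcomp (wcomp h g) f) (wcomp h (wcomp g f))
| cty_ai a b c d h g f : wty f a b -> wty g b c -> wty h c d ->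
    cty a d (cai h g f) (wcomp h (wcomp g f)) (wcomp (wcomp h g) f)
| cty_l a b f : wty f a b -> cty a b (cl f) (wcomp (wid b) f) f
| cty_li a b f : wty f a b -> cty a b (cli f) f (wcomp (wid b) f)
| cty_r a b f : wty f a b -> cty a b (cr f) (wcomp f (wid a)) f
| cty_ri a b f : wty f a b -> cty a b (cri f) f (wcomp f (wid a))
| cty_gen a b y s t : yty y a b s t -> cty a b (cgen y) s t.

Inductive ceq : O -> O -> W -> W -> C -> C -> Prop :=
| ceq_refl a b u v al : cty a b al u v -> ceq a b u v al al
| ceq_sym a b u v al be : ceq a b u v al be -> ceq a b u v be al
| ceq_trans a b u v al be ga :
    ceq a b u v al be -> ceq a b u v be ga -> ceq a b u v al ga
| ceq_v a b u v w al al' be be' :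
    ceq a b u v al al' -> ceq a b v w be be' ->
    ceq a b u w (cv be al) (cv be' al')
| ceq_h a b c f f' g g' al al' be be' :
    ceq a b f f' al al' -> ceq b c g g' be be' ->
    ceq a c (wcomp g f) (wcomp g' f') (ch be al) (ch be' al')
| ceq_idl a b u v al : cty a b al u v -> ceq a b u v (cv (cid v) al) al
| ceq_idr a b u v al : cty a b al u v -> ceq a b u v (cv al (cid u)) al
| ceq_vassoc a b u v w x al be ga :
    cty a b al u v -> cty a b be v w -> cty a b ga w x ->
    ceq a b u x (cv ga (cv be al)) (cv (cv ga be) al)
| ceq_hid a b c f g : wty f a b -> wty g b c ->
    ceq a c (wcomp g f) (wcomp g f) (ch (cid g) (cid f)) (cid (wcomp g f))
| ceq_interchange a b c f f' f'' g g' g'' al al' be be' :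
    cty a b al f f' -> cty a b al' f' f'' ->
    cty b c be g g' -> cty b c be' g' g'' ->
    ceq a c (wcomp g f) (wcomp g'' f'')
        (ch (cv be' be) (cv al' al)) (cv (ch be' al') (ch be al))
| ceq_a_nat a b c d f f' g g' h h' al be ga :
    cty a b al f f' -> cty b c be g g' -> cty c d ga h h' ->
    ceq a d (wcomp (wcomp h g) f) (wcomp h' (wcomp g' f'))
        (cv (ca h' g' f') (ch (ch ga be) al))
        (cv (ch ga (ch be al)) (ca h g f))
| ceq_l_nat a b f f' al : cty a b al f f' ->
    ceq a b (wcomp (wid b) f) f'
        (cv (cl f') (ch (cid (wid b)) al)) (cv al (cl f))
| ceq_r_nat a b f f' al : cty a b al f f' ->
    ceq a b (wcomp f (wid a)) f'
        (cv (cr f') (ch al (cid (wid a)))) (cv al (cr f))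
| ceq_a_inv1 a b c d h g f : wty f a b -> wty g b c -> wty h c d ->
    ceq a d (wcomp (wcomp h g) f) (wcomp (wcomp h g) f)
        (cv (cai h g f) (ca h g f)) (cid (wcomp (wcomp h g) f))
| ceq_a_inv2 a b c d h g f : wty f a b -> wty g b c -> wty h c d ->
    ceq a d (wcomp h (wcomp g f)) (wcomp h (wcomp g f))
        (cv (ca h g f) (cai h g f)) (cid (wcomp h (wcomp g f)))
| ceq_l_inv1 a b f : wty f a b ->
    ceq a b (wcomp (wid b) f) (wcomp (wid b) f)
        (cv (cli f) (cl f)) (cid (wcomp (wid b) f))
| ceq_l_inv2 a b f : wty f a b ->
    ceq a b f f (cv (cl f) (cli f)) (cid f)
| ceq_r_inv1 a b f : wty f a b ->
    ceq a b (wcomp f (wid a)) (wcomp f (wid a))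
        (cv (cri f) (cr f)) (cid (wcomp f (wid a)))
| ceq_r_inv2 a b f : wty f a b ->
    ceq a b f f (cv (cr f) (cri f)) (cid f)
| ceq_pentagon a b c d e f g h k :
    wty f a b -> wty g b c -> wty h c d -> wty k d e ->
    ceq a e (wcomp (wcomp (wcomp k h) g) f) (wcomp k (wcomp h (wcomp g f)))
        (cv (ca k h (wcomp g f)) (ca (wcomp k h) g f))
        (cv (ch (cid k) (ca h g f))
            (cv (ca k (wcomp h g) f) (ch (ca k h g) (cid f))))
| ceq_triangle a b c f g : wty f a b -> wty g b c ->
    ceq a c (wcomp (wcomp g (wid b)) f) (wcomp g f)
        (cv (ch (cid g) (cl f)) (ca g (wid b) f))
        (ch (cr g) (cid f))
| ceq_rel a b u v al be :
    rel a b u v al be -> cty a b al u v -> cty a b be u v ->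
    ceq a b u v al be.

End FreeBicat.

Arguments wty {O X}.
Arguments cty {O X Y}.
Arguments ceq {O X Y}.

Section FreeOnGraph.
Variable G : graph.

Definition FW := word (V G) (E G).
Definition FC := cell (V G) (E G) Empty_set.

Inductive Fxty : E G -> V G -> V G -> Prop :=
| Fxty_e e : Fxty e (src G e) (tgt G e).

Definition Fyty (y : Empty_set) (a b : V G) (s t : FW) : Prop := False.
Definition Frel (a b : V G) (s t : FW) (al be : FC) : Prop := False.

Definition fwty : FW -> V G -> V G -> Prop := wty Fxty.
Definition fcty : V G -> V G -> FC -> FW -> FW -> Prop := cty Fxty Fyty.
Definition fceq : V G -> V G -> FW -> FW -> FC -> FC -> Prop :=
  ceq Fxty Fyty Frel.
End FreeOnGraph.

(* The bicategory M(H) (codomain of the free pseudofunctor Phi_H)      *)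
Section MH.
Variables (G M : graph) (H : gmap G M).

(* generating 1-cells: edges of M, and Phi(w) for w a 1-cell of F(G)
   which is not a single edge (Phi(X) is identified with H(X)) *)
Inductive gen1 : Type :=
| GE (e : E M)
| GPhi (w : FW G).

(* generating 2-cells: Phi(alpha), the composition constraints
   phi_{g,f} : Phi g . Phi f => Phi (g . f), the unit constraints
   phi_a : id_{H a} => Phi (id_a), and their inverses *)
Inductive gen2 : Type :=
| YPhi (al : FC G)
| YC (g f : FW G)
| YCi (g f : FW G)
| YU (a : V G)
| YUi (a : V G).

Definition MW := word (V M) gen1.
Definition MC := cell (V M) gen1 gen2.

Definition phi1 (w : FW G) : gen1 :=
  match w with
  | wgen x => GE (hE H x)
  | _ => GPhi w
  end.
Definition Pw (w : FW G) : MW := wgen (phi1 w).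

Inductive Mxty : gen1 -> V M -> V M -> Prop :=
| Mxty_E e : Mxty (GE e) (src M e) (tgt M e)
| Mxty_Phi w a b : fwty w a b -> (forall x, w <> wgen x) ->
    Mxty (GPhi w) (hV H a) (hV H b).

Inductive Myty : gen2 -> V M -> V M -> MW -> MW -> Prop :=
| Myty_Phi a b al s t : fcty a b al s t ->
    Myty (YPhi al) (hV H a) (hV H b) (Pw s) (Pw t)
| Myty_C a b c g f : fwty f a b -> fwty g b c ->
    Myty (YC g f) (hV H a) (hV H c) (wcomp (Pw g) (Pw f)) (Pw (wcomp g f))
| Myty_Ci a b c g f : fwty f a b -> fwty g b c ->
    Myty (YCi g f) (hV H a) (hV H c) (Pw (wcomp g f)) (wcomp (Pw g) (Pw f))
| Myty_U a : Myty (YU a) (hV H a) (hV H a) (wid (hV H a)) (Pw (wid a))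
| Myty_Ui a : Myty (YUi a) (hV H a) (hV H a) (Pw (wid a)) (wid (hV H a)).

Local Notation Phi al := (@cgen (V M) gen1 gen2 (YPhi al)).
Local Notation phiC g f := (@cgen (V M) gen1 gen2 (YC g f)).
Local Notation phiCi g f := (@cgen (V M) gen1 gen2 (YCi g f)).
Local Notation phiU a := (@cgen (V M) gen1 gen2 (YU a)).
Local Notation phiUi a := (@cgen (V M) gen1 gen2 (YUi a)).

(* the pseudofunctor axioms for Phi *)
Inductive Mrel : V M -> V M -> MW -> MW -> MC -> MC -> Prop :=
| R_resp a b s t al be : fceq a b s t al be ->
    Mrel (hV H a) (hV H b) (Pw s) (Pw t) (Phi al) (Phi be)
| R_id a b w : fwty w a b ->
    Mrel (hV H a) (hV H b) (Pw w) (Pw w) (Phi (cid w)) (cid (Pw w))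
| R_v a b u v w al be : fcty a b al u v -> fcty a b be v w ->
    Mrel (hV H a) (hV H b) (Pw u) (Pw w) (Phi (cv be al)) (cv (Phi be) (Phi al))
| R_nat a b c f f' g g' al be : fcty a b al f f' -> fcty b c be g g' ->
    Mrel (hV H a) (hV H c) (wcomp (Pw g) (Pw f)) (Pw (wcomp g' f'))
      (cv (phiC g' f') (ch (Phi be) (Phi al)))
      (cv (Phi (ch be al)) (phiC g f))
| R_C_inv1 a b c g f : fwty f a b -> fwty g b c ->
    Mrel (hV H a) (hV H c) (wcomp (Pw g) (Pw f)) (wcomp (Pw g) (Pw f))
      (cv (phiCi g f) (phiC g f)) (cid (wcomp (Pw g) (Pw f)))
| R_C_inv2 a b c g f : fwty f a b -> fwty g b c ->
    Mrel (hV H a) (hV H c) (Pw (wcomp g f)) (Pw (wcomp g f))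
      (cv (phiC g f) (phiCi g f)) (cid (Pw (wcomp g f)))
| R_U_inv1 a :
    Mrel (hV H a) (hV H a) (wid (hV H a)) (wid (hV H a))
      (cv (phiUi a) (phiU a)) (cid (wid (hV H a)))
| R_U_inv2 a :
    Mrel (hV H a) (hV H a) (Pw (wid a)) (Pw (wid a))
      (cv (phiU a) (phiUi a)) (cid (Pw (wid a)))
| R_assoc a b c d h g f : fwty f a b -> fwty g b c -> fwty h c d ->
    Mrel (hV H a) (hV H d) (wcomp (wcomp (Pw h) (Pw g)) (Pw f))
      (Pw (wcomp h (wcomp g f)))
      (cv (Phi (ca h g f)) (cv (phiC (wcomp h g) f) (ch (phiC h g) (cid (Pw f)))))
      (cv (phiC h (wcomp g f)) (cv (ch (cid (Pw h)) (phiC g f)) (ca (Pw h) (Pw g) (Pw f))))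
| R_lunit a b f : fwty f a b ->
    Mrel (hV H a) (hV H b) (wcomp (wid (hV H b)) (Pw f)) (Pw f)
      (cv (Phi (cl f)) (cv (phiC (wid b) f) (ch (phiU b) (cid (Pw f)))))
      (cl (Pw f))
| R_runit a b f : fwty f a b ->
    Mrel (hV H a) (hV H b) (wcomp (Pw f) (wid (hV H a))) (Pw f)
      (cv (Phi (cr f)) (cv (phiC f (wid a)) (ch (cid (Pw f)) (phiU a))))
      (cr (Pw f)).

Definition Mcty : V M -> V M -> MC -> MW -> MW -> Prop := cty Mxty Myty.
Definition Mceq : V M -> V M -> MW -> MW -> MC -> MC -> Prop :=
  ceq Mxty Myty Mrel.

Definition Mhom_thin (x y : V M) : Prop :=
  forall (u v : MW) (al be : MC),
    Mcty x y al u v -> Mcty x y be u v -> Mceq x y u v al be.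
End MH.

(* Main.v *)
Require Import Defs.
From Stdlib Require Import List.
Import ListNotations.

Ltac ty_extra := fail.
Ltac ty_step := match goal with
 | |- wty _ (wid _) _ _ => eapply wty_id
 | |- wty _ (wcomp _ _) _ _ => eapply wty_comp
 | |- cty _ _ _ _ (cid _) _ _ => eapply cty_id
 | |- cty _ _ _ _ (cv _ _) _ _ => eapply cty_v
 | |- cty _ _ _ _ (ch _ _) _ _ => eapply cty_h
 | |- cty _ _ _ _ (ca _ _ _) _ _ => eapply cty_a
 | |- cty _ _ _ _ (cai _ _ _) _ _ => eapply cty_ai
 | |- cty _ _ _ _ (cl _) _ _ => eapply cty_l
 | |- cty _ _ _ _ (cli _) _ _ => eapply cty_li
 | |- cty _ _ _ _ (cr _) _ _ => eapply cty_r
 | |- cty _ _ _ _ (cri _) _ _ => eapply cty_ri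
 end.
Ltac ty := repeat (first [eassumption | ty_step | ty_extra]).

Section Gen.
Variables (O X Y : Type).
Variable xty : X -> O -> O -> Prop.
Variable yty : Y -> O -> O -> word O X -> word O X -> Prop.
Variable rel : O -> O -> word O X -> word O X -> cell O X Y -> cell O X Y -> Prop.
Hypothesis yty_wty : forall y a b s t, yty y a b s t -> wty xty s a b /\ wty xty t a b.

Local Notation T := (cty xty yty).
Local Notation WT := (wty xty).
Local Notation EQ := (ceq xty yty rel).

Lemma cty_wty a b al u v : T a b al u v -> WT u a b /\ WT v a b.
Proof.
  induction 1; repeat match goal with H : _ /\ _ |- _ => destruct H end;
  [..| now apply (yty_wty y)];
  repeat split; eauto using wty.
Qed.

Lemma cty_wty1 a b al u v : T a b al u v -> WT u a b.
Proof. intro h; apply (cty_wty _ _ _ _ _ h). Qed.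
Lemma cty_wty2 a b al u v : T a b al u v -> WT v a b.
Proof. intro h; apply (cty_wty _ _ _ _ _ h). Qed.

Hint Resolve cty_wty1 cty_wty2 : tyDB.
Hint Constructors wty cty : tyDB.

Lemma ceq_ty a b u v al be : EQ a b u v al be -> T a b al u v /\ T a b be u v.
Proof.
  induction 1; repeat match goal with H : _ /\ _ |- _ => destruct H end;
  split; ty. all: try first [eapply cty_wty1; eassumption | eapply cty_wty2; eassumption].
Qed.
Lemma ceq_ty1 a b u v al be : EQ a b u v al be -> T a b al u v.
Proof. intro h; apply (ceq_ty _ _ _ _ _ _ h). Qed.
Lemma ceq_ty2 a b u v al be : EQ a b u v al be -> T a b be u v.
Proof. intro h; apply (ceq_ty _ _ _ _ _ _ h). Qed.


Hint Resolve ceq_ty1 ceq_ty2 : tyDB.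

Lemma E_refl a b u v al : T a b al u v -> EQ a b u v al al.
Proof. apply ceq_refl. Qed.
Lemma E_sym a b u v al be : EQ a b u v al be -> EQ a b u v be al.
Proof. apply ceq_sym. Qed.
Lemma E_trans a b u v al be ga :
  EQ a b u v al be -> EQ a b u v be ga -> EQ a b u v al ga.
Proof. apply ceq_trans. Qed.

Lemma vL a b u v w al be be' :
  EQ a b v w be be' -> T a b al u v -> EQ a b u w (cv be al) (cv be' al).
Proof. intros; eapply ceq_v; [apply ceq_refl; eassumption|eassumption]. Qed.
Lemma vR a b u v w al al' be :
  T a b be v w -> EQ a b u v al al' -> EQ a b u w (cv be al) (cv be al').
Proof. intros; eapply ceq_v; [eassumption|apply ceq_refl; eassumption]. Qed.
Lemma hL a b c f f' g g' al be be' :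
  EQ b c g g' be be' -> T a b al f f' ->
  EQ a c (wcomp g f) (wcomp g' f') (ch be al) (ch be' al).
Proof. intros; eapply ceq_h; [apply ceq_refl; eassumption|eassumption]. Qed.
Lemma hR a b c f f' g g' al al' be :
  T b c be g g' -> EQ a b f f' al al' ->
  EQ a c (wcomp g f) (wcomp g' f') (ch be al) (ch be al').
Proof. intros; eapply ceq_h; [eassumption|apply ceq_refl; eassumption]. Qed.

Lemma vA a b u v w x al be ga :
  T a b al u v -> T a b be v w -> T a b ga w x ->
  EQ a b u x (cv ga (cv be al)) (cv (cv ga be) al).
Proof. apply ceq_vassoc. Qed.
Lemma vA' a b u v w x al be ga :
  T a b al u v -> T a b be v w -> T a b ga w x ->
  EQ a b u x (cv (cv ga be) al) (cv ga (cv be al)).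
Proof. intros; apply ceq_sym; eapply ceq_vassoc; eauto. Qed.

Lemma idl a b u v al : T a b al u v -> EQ a b u v (cv (cid v) al) al.
Proof. apply ceq_idl. Qed.
Lemma idr a b u v al : T a b al u v -> EQ a b u v (cv al (cid u)) al.
Proof. apply ceq_idr. Qed.

Lemma hid a b c f g : WT f a b -> WT g b c ->
  EQ a c (wcomp g f) (wcomp g f) (ch (cid g) (cid f)) (cid (wcomp g f)).
Proof. apply ceq_hid. Qed.

Lemma xch a b c f f' f'' g g' g'' al al' be be' :
  T a b al f f' -> T a b al' f' f'' -> T b c be g g' -> T b c be' g' g'' ->
  EQ a c (wcomp g f) (wcomp g'' f'')
     (ch (cv be' be) (cv al' al)) (cv (ch be' al') (ch be al)).
Proof. apply ceq_interchange. Qed.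

Lemma wL a b c f f' f'' g al al' :
  WT g b c -> T a b al f f' -> T a b al' f' f'' ->
  EQ a c (wcomp g f) (wcomp g f'')
     (ch (cid g) (cv al' al)) (cv (ch (cid g) al') (ch (cid g) al)).
Proof.
  intros. eapply E_trans; [|eapply xch; eauto with tyDB].
  eapply hL; [apply E_sym, idl|]; eauto with tyDB.
Qed.

Lemma wR a b c f g g' g'' be be' :
  WT f a b -> T b c be g g' -> T b c be' g' g'' ->
  EQ a c (wcomp g f) (wcomp g'' f)
     (ch (cv be' be) (cid f)) (cv (ch be' (cid f)) (ch be (cid f))).
Proof.
  intros. eapply E_trans; [|eapply xch; eauto with tyDB].
  eapply hR; [|apply E_sym, idl]; eauto with tyDB.
Qed.

Lemma hsplit1 a b c f f' g g' al be :
  T a b al f f' -> T b c be g g' ->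
  EQ a c (wcomp g f) (wcomp g' f')
     (ch be al) (cv (ch be (cid f')) (ch (cid g) al)).
Proof.
  intros. eapply E_trans; [|eapply xch; eauto with tyDB].
  eapply ceq_h; apply E_sym; [eapply idl|eapply idr]; eauto with tyDB.
Qed.
Lemma hsplit2 a b c f f' g g' al be :
  T a b al f f' -> T b c be g g' ->
  EQ a c (wcomp g f) (wcomp g' f')
     (ch be al) (cv (ch (cid g') al) (ch be (cid f))).
Proof.
  intros. eapply E_trans; [|eapply xch; eauto with tyDB].
  eapply ceq_h; apply E_sym; [eapply idr|eapply idl]; eauto with tyDB.
Qed.

Lemma hcid_l a b c f g al : WT g b c -> T a b al f f ->
  EQ a b f f al (cid f) ->
  EQ a c (wcomp g f) (wcomp g f) (ch (cid g) al) (cid (wcomp g f)).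
Proof.
  intros. eapply E_trans; [eapply hR; eauto with tyDB|eapply hid]; eauto with tyDB.
Qed.
Lemma hcid_r a b c f g be : WT f a b -> T b c be g g ->
  EQ b c g g be (cid g) ->
  EQ a c (wcomp g f) (wcomp g f) (ch be (cid f)) (cid (wcomp g f)).
Proof.
  intros. eapply E_trans; [eapply hL; eauto with tyDB|eapply hid]; eauto with tyDB.
Qed.

Definition isinv a b u v al al' :=
  T a b al u v /\ T a b al' v u /\
  EQ a b u u (cv al' al) (cid u) /\ EQ a b v v (cv al al') (cid v).

Lemma cancel_r a b u v w A B Xc Xc' :
  isinv a b w u Xc Xc' -> T a b A u v -> T a b B u v ->
  EQ a b w v (cv A Xc) (cv B Xc) -> EQ a b u v A B.
Proof.
  intros [h1 [h2 [h3 h4]]] hA hB e.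
  apply E_trans with (cv A (cv Xc Xc')).
  { apply E_sym. eapply E_trans. eapply vR. eexact hA. eexact h4. apply idr; auto. }
  apply E_trans with (cv (cv A Xc) Xc').
  { eapply vA; eauto. }
  apply E_trans with (cv (cv B Xc) Xc').
  { eapply vL; eauto. }
  apply E_trans with (cv B (cv Xc Xc')).
  { eapply vA'; eauto. }
  eapply E_trans. eapply vR. eexact hB. eexact h4. apply idr; auto.
Qed.

Lemma cancel_l a b u v w A B Xc Xc' :
  isinv a b v w Xc Xc' -> T a b A u v -> T a b B u v ->
  EQ a b u w (cv Xc A) (cv Xc B) -> EQ a b u v A B.
Proof.
  intros [h1 [h2 [h3 h4]]] hA hB e.
  apply E_trans with (cv (cv Xc' Xc) A).
  { apply E_sym. eapply E_trans. eapply vL. eexact h3. eexact hA. apply idl; auto. }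
  apply E_trans with (cv Xc' (cv Xc A)).
  { eapply vA'; eauto. }
  apply E_trans with (cv Xc' (cv Xc B)).
  { eapply vR; eauto. }
  apply E_trans with (cv (cv Xc' Xc) B).
  { eapply vA; eauto. }
  eapply E_trans. eapply vL. eexact h3. eexact hB. apply idl; auto.
Qed.

Lemma isinv_sym a b u v al al' : isinv a b u v al al' -> isinv a b v u al' al.
Proof. unfold isinv; tauto. Qed.

Lemma isinv_v a b u v w al al' be be' :
  isinv a b u v al al' -> isinv a b v w be be' -> isinv a b u w (cv be al) (cv al' be').
Proof.
  intros [h1 [h2 [h3 h4]]] [k1 [k2 [k3 k4]]]. repeat split; eauto with tyDB.
  - apply E_trans with (cv al' (cv be' (cv be al))). { eapply vA'; eauto with tyDB. }
    apply E_trans with (cv al' (cv (cv be' be) al)). { eapply vR. eauto. eapply vA; eauto. }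
    apply E_trans with (cv al' (cv (cid v) al)). { eapply vR. eauto. eapply vL; eauto. }
    apply E_trans with (cv al' al). { eapply vR. eauto. apply idl; auto. }
    auto.
  - apply E_trans with (cv be (cv al (cv al' be'))). { eapply vA'; eauto with tyDB. }
    apply E_trans with (cv be (cv (cv al al') be')). { eapply vR. eauto. eapply vA; eauto. }
    apply E_trans with (cv be (cv (cid v) be')). { eapply vR. eauto. eapply vL; eauto. }
    apply E_trans with (cv be be'). { eapply vR. eauto. apply idl; auto. }
    auto.
Qed.

Lemma isinv_h a b c f f' g g' al al' be be' :
  isinv a b f f' al al' -> isinv b c g g' be be' ->
  isinv a c (wcomp g f) (wcomp g' f') (ch be al) (ch be' al').
Proof.
  intros [h1 [h2 [h3 h4]]] [k1 [k2 [k3 k4]]]. repeat split; eauto with tyDB.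
  - eapply E_trans; [apply E_sym; eapply xch; eauto|].
    eapply E_trans; [eapply ceq_h; eauto|eapply hid]; eauto with tyDB.
  - eapply E_trans; [apply E_sym; eapply xch; eauto|].
    eapply E_trans; [eapply ceq_h; eauto|eapply hid]; eauto with tyDB.
Qed.

Lemma isinv_cid a b u : WT u a b -> isinv a b u u (cid u) (cid u).
Proof. intros; repeat split; eauto with tyDB; eapply idl; eauto with tyDB. Qed.

Hypothesis gen_inv : forall y a b s t, yty y a b s t ->
  exists y', isinv a b s t (cgen y) y'.

Lemma all_inv a b al u v : T a b al u v -> exists al', isinv a b u v al al'.
Proof.
  induction 1.
  - eexists; eapply isinv_cid; auto.
  - destruct IHcty1 as [x1 i1], IHcty2 as [x2 i2]; eexists; eapply isinv_v; eauto.
  - destruct IHcty1 as [x1 i1], IHcty2 as [x2 i2]; eexists; eapply isinv_h; eauto.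
  - exists (cai h g f); repeat split; eauto with tyDB.
    eapply ceq_a_inv1; eauto. eapply ceq_a_inv2; eauto.
  - exists (ca h g f); repeat split; eauto with tyDB.
    eapply ceq_a_inv2; eauto. eapply ceq_a_inv1; eauto.
  - exists (cli f); repeat split; eauto with tyDB.
    eapply ceq_l_inv1; eauto. eapply ceq_l_inv2; eauto.
  - exists (cl f); repeat split; eauto with tyDB.
    eapply ceq_l_inv2; eauto. eapply ceq_l_inv1; eauto.
  - exists (cri f); repeat split; eauto with tyDB.
    eapply ceq_r_inv1; eauto. eapply ceq_r_inv2; eauto.
  - exists (cr f); repeat split; eauto with tyDB.
    eapply ceq_r_inv2; eauto. eapply ceq_r_inv1; eauto.
  - eapply gen_inv; eauto.
Qed.


End Gen.

#[export] Hint Resolve cty_wty1 cty_wty2 ceq_ty1 ceq_ty2 : tyDB.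
#[export] Hint Constructors wty cty : tyDB.

Section GenK.
Variables (O X Y : Type).
Variable xty : X -> O -> O -> Prop.
Variable yty : Y -> O -> O -> word O X -> word O X -> Prop.
Variable rel : O -> O -> word O X -> word O X -> cell O X Y -> cell O X Y -> Prop.
Hypothesis yty_wty : forall y a b s t, yty y a b s t -> wty xty s a b /\ wty xty t a b.
Local Notation T := (cty xty yty).
Local Notation WT := (wty xty).
Local Notation EQ := (ceq xty yty rel).
Local Notation isinv := (@isinv O X Y xty yty rel).
Let w1 := @cty_wty1 O X Y xty yty yty_wty.
Let w2 := @cty_wty2 O X Y xty yty yty_wty.
Let e1 := @ceq_ty1 O X Y xty yty rel yty_wty.
Let e2 := @ceq_ty2 O X Y xty yty rel yty_wty.
Ltac ty_extra ::= first [eapply w1; eassumption | eapply w2; eassumption | eapply e1; eassumption | eapply e2; eassumption].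
Lemma isinv_ca a b c d h g f : WT f a b -> WT g b c -> WT h c d ->
  isinv a d (wcomp (wcomp h g) f) (wcomp h (wcomp g f)) (ca h g f) (cai h g f).
Proof. intros; repeat split; ty; eapply ceq_a_inv1 || eapply ceq_a_inv2; eauto. Qed.

Lemma faithful_id a b f f' al be :
  T a b al f f' -> T a b be f f' ->
  EQ a b (wcomp (wid b) f) (wcomp (wid b) f') (ch (cid (wid b)) al) (ch (cid (wid b)) be) ->
  EQ a b f f' al be.
Proof.
  intros ha hb e. assert (hf : WT f a b) by ty.
  apply E_trans with (cv al (cv (cl f) (cli f))).
  { apply E_sym. eapply E_trans. eapply vR. eexact ha. eapply ceq_l_inv2. eauto. apply idr; auto. }
  apply E_trans with (cv (cv al (cl f)) (cli f)). { eapply vA. all: ty. }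
  apply E_trans with (cv (cv (cl f') (ch (cid (wid b)) al)) (cli f)).
  { eapply vL. apply E_sym. apply ceq_l_nat. all: ty. }
  apply E_trans with (cv (cv (cl f') (ch (cid (wid b)) be)) (cli f)).
  { eapply vL. eapply vR. 2: eexact e. all: ty. }
  apply E_trans with (cv (cv be (cl f)) (cli f)).
  { eapply vL. apply ceq_l_nat. all: ty. }
  apply E_trans with (cv be (cv (cl f) (cli f))). { eapply vA'. all: ty. }
  eapply E_trans. eapply vR. eexact hb. eapply ceq_l_inv2; eauto. apply idr; auto.
Qed.

Lemma K1 a b c f g : WT f a b -> WT g b c ->
  EQ a c (wcomp (wcomp (wid c) g) f) (wcomp g f)
    (cv (cl (wcomp g f)) (ca (wid c) g f)) (ch (cl g) (cid f)).
Proof.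
  intros hf hg. assert (h1 : WT (wid c) c c) by constructor.
  apply faithful_id. 1,2: ty.
  assert (hX : isinv a c (wcomp (wcomp (wcomp (wid c) (wid c)) g) f) (wcomp (wid c) (wcomp (wcomp (wid c) g) f))
     (cv (ca (wid c) (wcomp (wid c) g) f) (ch (ca (wid c) (wid c) g) (cid f))) (cv (ch (cai (wid c) (wid c) g) (cid f)) (cai (wid c) (wcomp (wid c) g) f))).
  { eapply isinv_v with (v := wcomp (wcomp (wid c) (wcomp (wid c) g)) f); try exact yty_wty.
    { eapply isinv_h; try exact yty_wty. eapply isinv_cid; exact hf. eapply isinv_ca; ty. }
    eapply isinv_ca; ty. }
  eapply cancel_r. exact hX. 1,2: ty.
  apply E_trans with (cv (cv (ch (cid (wid c)) (cl (wcomp g f))) (ch (cid (wid c)) (ca (wid c) g f))) (cv (ca (wid c) (wcomp (wid c) g) f) (ch (ca (wid c) (wid c) g) (cid f)))).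
  { eapply vL. eapply wL. all: ty. }
  apply E_trans with (cv (ch (cid (wid c)) (cl (wcomp g f))) (cv (ch (cid (wid c)) (ca (wid c) g f)) (cv (ca (wid c) (wcomp (wid c) g) f) (ch (ca (wid c) (wid c) g) (cid f))))).
  { eapply vA'. all: ty. }
  apply E_trans with (cv (ch (cid (wid c)) (cl (wcomp g f))) (cv (ca (wid c) (wid c) (wcomp g f)) (ca (wcomp (wid c) (wid c)) g f))).
  { eapply vR. 2: apply E_sym; eapply ceq_pentagon. all: ty. }
  apply E_trans with (cv (cv (ch (cid (wid c)) (cl (wcomp g f))) (ca (wid c) (wid c) (wcomp g f))) (ca (wcomp (wid c) (wid c)) g f)).
  { eapply vA. all: ty. }
  apply E_trans with (cv (ch (cr (wid c)) (cid (wcomp g f))) (ca (wcomp (wid c) (wid c)) g f)).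
  { eapply vL. eapply ceq_triangle. all: ty. }
  apply E_trans with (cv (ch (cr (wid c)) (ch (cid g) (cid f))) (ca (wcomp (wid c) (wid c)) g f)).
  { eapply vL. eapply hR. 2: apply E_sym; eapply hid. all: ty. }
  apply E_trans with (cv (ca (wid c) g f) (ch (ch (cr (wid c)) (cid g)) (cid f))).
  { apply E_sym. eapply ceq_a_nat. all: ty. }
  apply E_trans with (cv (ca (wid c) g f) (ch (cv (ch (cid (wid c)) (cl g)) (ca (wid c) (wid c) g)) (cid f))).
  { eapply vR. 2: eapply hL; [apply E_sym; eapply ceq_triangle|]. all: ty. }
  apply E_trans with (cv (ca (wid c) g f) (cv (ch (ch (cid (wid c)) (cl g)) (cid f)) (ch (ca (wid c) (wid c) g) (cid f)))).
  { eapply vR. 2: eapply wR. all: ty. }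
  apply E_trans with (cv (cv (ca (wid c) g f) (ch (ch (cid (wid c)) (cl g)) (cid f))) (ch (ca (wid c) (wid c) g) (cid f))).
  { eapply vA. all: ty. }
  apply E_trans with (cv (cv (ch (cid (wid c)) (ch (cl g) (cid f))) (ca (wid c) (wcomp (wid c) g) f)) (ch (ca (wid c) (wid c) g) (cid f))).
  { eapply vL. eapply ceq_a_nat. all: ty. }
  eapply vA'. all: ty.
Qed.

End GenK.

Ltac leaf_extra := fail.
Ltac tyS := solve [ty].
Ltac leaf := first [
   solve [eapply E_refl; ty]
 | solve [eapply vA; ty] | solve [eapply vA'; ty]
 | solve [eapply idl; ty] | solve [eapply idr; ty]
 | solve [apply E_sym; eapply idl; ty] | solve [apply E_sym; eapply idr; ty]
 | solve [eapply hid; ty] | solve [apply E_sym; eapply hid; ty]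
 | solve [eapply xch; ty] | solve [apply E_sym; eapply xch; ty]
 | solve [eapply wL; ty] | solve [apply E_sym; eapply wL; ty]
 | solve [eapply wR; ty] | solve [apply E_sym; eapply wR; ty]
 | solve [eapply hsplit1; ty] | solve [apply E_sym; eapply hsplit1; ty]
 | solve [eapply hsplit2; ty] | solve [apply E_sym; eapply hsplit2; ty]
 | solve [eapply ceq_a_nat; ty] | solve [apply E_sym; eapply ceq_a_nat; ty]
 | solve [eapply ceq_l_nat; ty] | solve [apply E_sym; eapply ceq_l_nat; ty]
 | solve [eapply ceq_r_nat; ty] | solve [apply E_sym; eapply ceq_r_nat; ty]
 | solve [eapply ceq_pentagon; ty] | solve [apply E_sym; eapply ceq_pentagon; ty]
 | solve [eapply ceq_triangle; ty] | solve [apply E_sym; eapply ceq_triangle; ty]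
 | solve [eapply ceq_a_inv1; ty] | solve [apply E_sym; eapply ceq_a_inv1; ty]
 | solve [eapply ceq_a_inv2; ty] | solve [apply E_sym; eapply ceq_a_inv2; ty]
 | solve [eapply ceq_l_inv1; ty] | solve [apply E_sym; eapply ceq_l_inv1; ty]
 | solve [eapply ceq_l_inv2; ty] | solve [apply E_sym; eapply ceq_l_inv2; ty]
 | solve [eapply ceq_r_inv1; ty] | solve [apply E_sym; eapply ceq_r_inv1; ty]
 | solve [eapply ceq_r_inv2; ty] | solve [apply E_sym; eapply ceq_r_inv2; ty]
 | solve [eapply K1; ty] | solve [apply E_sym; eapply K1; ty]
 | solve [eassumption] | solve [apply E_sym; eassumption]
 | leaf_extra ].

Ltac dstep := match goal with
 | |- ceq _ _ _ _ _ _ _ ?x ?x => solve [eapply E_refl; ty]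
 | |- ceq _ _ _ _ _ _ _ (cv ?a ?b) (cv ?a ?c) => eapply vR; [tyS | dstep]
 | |- ceq _ _ _ _ _ _ _ (cv ?b ?a) (cv ?c ?a) => eapply vL; [dstep | tyS]
 | |- ceq _ _ _ _ _ _ _ (ch ?a ?b) (ch ?a ?c) => eapply hR; [tyS | dstep]
 | |- ceq _ _ _ _ _ _ _ (ch ?b ?a) (ch ?c ?a) => eapply hL; [dstep | tyS]
 | _ => leaf
 end.
Ltac tr x := apply E_trans with (be := x); [dstep|].


Section MM.
Variables (G M : graph) (H : gmap G M).

Local Notation MWt := (MW G M).
Local Notation MCt := (MC G M).
Local Notation WT := (wty (Mxty H)).
Local Notation T := (Mcty H).
Local Notation EQ := (Mceq H).
Local Notation FWT := (@fwty G).
Local Notation FT := (@fcty G).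
Local Notation FEQ := (@fceq G).

Fixpoint gedges (w : FW G) : list (E G) :=
  match w with
  | wid _ => []
  | wgen x => [x]
  | wcomp g f => gedges g ++ gedges f
  end.

Definition edges1 (x : gen1 G M) : list (E M) :=
  match x with
  | GE _ _ e => [e]
  | GPhi _ w => map (hE H) (gedges w)
  end.

Fixpoint edges (u : MWt) : list (E M) :=
  match u with
  | wid _ => []
  | wgen x => edges1 x
  | wcomp g f => edges g ++ edges f
  end.

Fixpoint nfapp (l : list (E M)) (N : MWt) : MWt :=
  match l with
  | [] => N
  | e :: l => wcomp (wgen (GE G M e)) (nfapp l N)
  end.

Fixpoint kG (w : FW G) (N : MWt) : MCt :=
  match w with
  | wid a => cv (cl N) (ch (cgen (YUi G a)) (cid N))
  | wgen x => cid (wcomp (wgen (GE G M (hE H x))) N)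
  | wcomp g f =>
      cv (cv (kG g (nfapp (map (hE H) (gedges f)) N))
             (cv (ch (cid (Pw H g)) (kG f N)) (ca (Pw H g) (Pw H f) N)))
         (ch (cgen (YCi g f)) (cid N))
  end.

Fixpoint k (u : MWt) (N : MWt) : MCt :=
  match u with
  | wid _ => cl N
  | wgen (GE _ _ e) => cid (wcomp (wgen (GE G M e)) N)
  | wgen (GPhi _ w) => kG w N
  | wcomp g f => cv (k g (nfapp (edges f) N)) (cv (ch (cid g) (k f N)) (ca g f N))
  end.

Lemma k_comp g f N : k (wcomp g f) N =
  cv (k g (nfapp (edges f) N)) (cv (ch (cid g) (k f N)) (ca g f N)).
Proof. reflexivity. Qed.

Lemma nfapp_app l1 l2 N : nfapp (l1 ++ l2) N = nfapp l1 (nfapp l2 N).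
Proof. induction l1; simpl; congruence. Qed.

Lemma edges_Pw w : edges (Pw H w) = map (hE H) (gedges w).
Proof. destruct w; reflexivity. Qed.

Lemma k_Pw w N : k (Pw H w) N = kG w N.
Proof. destruct w; reflexivity. Qed.

Lemma Pw_ne w : (forall x, w <> wgen x) -> Pw H w = wgen (GPhi M w).
Proof. destruct w as [|x0|]; intros h; auto. destruct (h x0); auto. Qed.

Lemma kG_comp g f N : kG (wcomp g f) N =
  cv (k (wcomp (Pw H g) (Pw H f)) N) (ch (cgen (YCi g f)) (cid N)).
Proof. simpl kG. rewrite <- !k_Pw, <- edges_Pw. reflexivity. Qed.

Lemma Pw_ty w a b : FWT w a b -> WT (Pw H w) (hV H a) (hV H b).
Proof.
  intro h. destruct w.
  - apply wty_gen. apply Mxty_Phi; auto. discriminate.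
  - inversion h; subst. match goal with h : Fxty _ _ _ _ |- _ => inversion h; subst end.
    apply wty_gen. unfold Pw; simpl. rewrite <- hsrc, <- htgt. apply Mxty_E.
  - apply wty_gen. apply Mxty_Phi; auto. discriminate.
Qed.

Lemma Fyty_wty : forall (y : Empty_set) a b (s t : FW G), @Fyty G y a b s t -> FWT s a b /\ FWT t a b.
Proof. intros []. Qed.

Lemma Myty_wty : forall y a b s t, Myty H y a b s t -> WT s a b /\ WT t a b.
Proof.
  intros y a b s t h; destruct h.
  - destruct (cty_wty _ _ _ _ _ Fyty_wty _ _ _ _ _ H0). split; apply Pw_ty; auto.
  - split. eapply wty_comp; apply Pw_ty; eauto. apply Pw_ty. eapply wty_comp; eauto.
  - split. apply Pw_ty. eapply wty_comp; eauto. eapply wty_comp; apply Pw_ty; eauto.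
  - split. constructor. apply Pw_ty; constructor.
  - split. apply Pw_ty; constructor. constructor.
Qed.

Lemma path_ty w a b z N : FWT w a b -> WT N z (hV H a) ->
  WT (nfapp (map (hE H) (gedges w)) N) z (hV H b).
Proof.
  intro h; revert z N; induction h; intros z N hN; simpl.
  - auto.
  - inversion H0; subst. eapply wty_comp. eauto. apply wty_gen.
    rewrite <- hsrc, <- htgt. apply Mxty_E.
  - rewrite map_app, nfapp_app. eauto.
Qed.

Lemma edges_ty u x y z N : WT u x y -> WT N z x -> WT (nfapp (edges u) N) z y.
Proof.
  intro h; revert z N; induction h; intros z N hN; simpl.
  - auto.
  - inversion H0; subst; simpl.
    + eapply wty_comp. exact hN. apply wty_gen. apply Mxty_E.
    + eapply path_ty; eauto.
  - rewrite nfapp_app. eauto.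
Qed.

Ltac ty_extra ::= first [ progress unfold Mcty, fcty, fwty, Mceq, fceq |
   eapply (cty_wty1 _ _ _ _ _ Myty_wty); eassumption
 | eapply (cty_wty2 _ _ _ _ _ Myty_wty); eassumption
 | eapply (ceq_ty1 _ _ _ _ _ _ Myty_wty); eassumption
 | eapply (ceq_ty2 _ _ _ _ _ _ Myty_wty); eassumption
 | eapply Pw_ty; eassumption
 | match goal with
   | |- cty _ _ _ _ (cgen (YC _ _)) _ _ => eapply cty_gen; eapply Myty_C
   | |- cty _ _ _ _ (cgen (YCi _ _)) _ _ => eapply cty_gen; eapply Myty_Ci
   | |- cty _ _ _ _ (cgen (YU _ _)) _ _ => eapply cty_gen; eapply Myty_U
   | |- cty _ _ _ _ (cgen (YUi _ _)) _ _ => eapply cty_gen; eapply Myty_Ui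
   | |- cty _ _ _ _ (cgen (YPhi _)) _ _ => eapply cty_gen; eapply Myty_Phi
   end ].

Lemma kG_ty w : forall a b z N, FWT w a b -> WT N z (hV H a) ->
  T z (hV H b) (kG w N) (wcomp (Pw H w) N) (nfapp (map (hE H) (gedges w)) N).
Proof.
  induction w as [a0|x|g IHg f IHf]; intros a b z N h hN.
  - inversion h; subst. simpl. ty.
  - inversion h; subst. match goal with h : Fxty _ _ _ _ |- _ => inversion h; subst end.
    simpl. apply cty_id. eapply wty_comp. eauto. apply wty_gen.
    rewrite <- hsrc, <- htgt. apply Mxty_E.
  - inversion h; subst.     rewrite kG_comp. simpl gedges. rewrite map_app, nfapp_app.
    rewrite k_comp, !k_Pw, edges_Pw.
    match goal with hf : wty _ f _ _, hg : wty _ g _ _ |- _ =>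
      assert (T1 := IHf _ _ _ _ hf hN); assert (T2 := IHg _ _ _ _ hg (path_ty _ _ _ _ _ hf hN)) end.
    ty.
Qed.

Lemma k_ty u : forall x y z N, WT u x y -> WT N z x ->
  T z y (k u N) (wcomp u N) (nfapp (edges u) N).
Proof.
  induction u as [a0|x0|g IHg f IHf]; intros x y z N h hN.
  - inversion h; subst. simpl. ty.
  - inversion h; subst. match goal with h : Mxty _ _ _ _ |- _ => inversion h; subst end.
    + simpl. ty.
    + match goal with h : forall x, _ <> wgen x |- _ => rewrite <- (Pw_ne _ h) end.
      rewrite k_Pw, edges_Pw. eapply kG_ty; eauto.
  - inversion h; subst.
    rewrite k_comp. simpl edges. rewrite nfapp_app.
    match goal with hf : wty _ f _ _, hg : wty _ g _ _ |- _ =>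
      assert (T1 := IHf _ _ _ _ hf hN); assert (T2 := IHg _ _ _ _ hg (edges_ty _ _ _ _ _ hf hN)) end.
    ty.
Qed.



Ltac ty_extra ::= first [ progress unfold Mcty, fcty, fwty, Mceq, fceq
 | exact Myty_wty | exact Fyty_wty
 | eapply (cty_wty1 _ _ _ _ _ Myty_wty); eassumption
 | eapply (cty_wty2 _ _ _ _ _ Myty_wty); eassumption
 | eapply (ceq_ty1 _ _ _ _ _ _ Myty_wty); eassumption
 | eapply (ceq_ty2 _ _ _ _ _ _ Myty_wty); eassumption
 | eapply (cty_wty1 _ _ _ _ _ Fyty_wty); eassumption
 | eapply (cty_wty2 _ _ _ _ _ Fyty_wty); eassumption
 | eapply Pw_ty; eassumption
 | match goal with |- wty _ (Pw _ _) _ _ => eapply Pw_ty end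
 | eapply (cty_wty1 _ _ _ _ _ Myty_wty); eapply (ceq_ty1 _ _ _ _ _ _ Myty_wty); eassumption
 | eapply (cty_wty2 _ _ _ _ _ Myty_wty); eapply (ceq_ty1 _ _ _ _ _ _ Myty_wty); eassumption
 | eapply k_ty
 | eapply edges_ty
 | match goal with
   | |- cty _ _ _ _ (cgen (YC _ _)) _ _ => eapply cty_gen; eapply Myty_C
   | |- cty _ _ _ _ (cgen (YCi _ _)) _ _ => eapply cty_gen; eapply Myty_Ci
   | |- cty _ _ _ _ (cgen (YU _ _)) _ _ => eapply cty_gen; eapply Myty_U
   | |- cty _ _ _ _ (cgen (YUi _ _)) _ _ => eapply cty_gen; eapply Myty_Ui
   | |- cty _ _ _ _ (cgen (YPhi _)) _ _ => eapply cty_gen; eapply Myty_Phi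
   end ].

Definition K1M := K1 _ _ _ (Mxty H) (Myty H) (Mrel H) Myty_wty.
Ltac leaf_extra ::= first [ solve [eapply K1M; ty] | solve [apply E_sym; eapply K1M; ty] ].

Definition Pk x y u v al := edges u = edges v /\ forall z N, WT N z x ->
  EQ z y (wcomp u N) (nfapp (edges u) N) (cv (k v N) (ch al (cid N))) (k u N).

Lemma P_id x y u : WT u x y -> Pk x y u u (cid u).
Proof.
  intros hu; split; auto; intros z N hN. unfold Mceq.
  tr (cv (k u N) (cid (wcomp u N))). dstep.
Qed.

Lemma P_ext x y u v al be : Pk x y u v al -> EQ x y u v al be -> Pk x y u v be.
Proof.
  intros [He Hk] e; split; auto; intros z N hN. specialize (Hk z N hN).
  rewrite He in Hk |- *. unfold Mceq in *.
  tr (cv (k v N) (ch al (cid N))). exact Hk.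
Qed.


Lemma P_v x y u v w al be : T x y al u v -> T x y be v w ->
  Pk x y u v al -> Pk x y v w be -> Pk x y u w (cv be al).
Proof.
  intros ha hb [E1 K1'] [E2 K2]. split. congruence. intros z N hN.
  specialize (K1' z N hN); specialize (K2 z N hN).
  rewrite E1 in K1' |- *. rewrite E2 in K1', K2 |- *. unfold Mceq in *.
  tr (cv (k w N) (cv (ch be (cid N)) (ch al (cid N)))).
  tr (cv (cv (k w N) (ch be (cid N))) (ch al (cid N))).
  tr (cv (k v N) (ch al (cid N))).
  exact K1'.
Qed.

Lemma P_inv x y u v al al' : @isinv _ _ _ (Mxty H) (Myty H) (Mrel H) x y u v al al' ->
  Pk x y u v al -> Pk x y v u al'.
Proof.
  intros [ha [ha' [i1 i2]]] [E K]. split. congruence. intros z N hN.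
  specialize (K z N hN). rewrite E in K. unfold Mceq in *.
  tr (cv (cv (k v N) (ch al (cid N))) (ch al' (cid N))).
  tr (cv (k v N) (cv (ch al (cid N)) (ch al' (cid N)))).
  tr (cv (k v N) (ch (cv al al') (cid N))).
  tr (cv (k v N) (ch (cid v) (cid N))).
  tr (cv (k v N) (cid (wcomp v N))).
  dstep.
Qed.

Lemma P_cancel x y u v w X X' Y Z :
  @isinv _ _ _ (Mxty H) (Myty H) (Mrel H) x y u w X X' -> T x y Y u v -> T x y Z w v ->
  EQ x y u v (cv Z X) Y -> Pk x y u w X -> Pk x y u v Y -> Pk x y w v Z.
Proof.
  intros hi hY hZ e PX PY.
  assert (PX' := P_inv _ _ _ _ _ _ hi PX).
  destruct hi as [hX [hX' [i1 i2]]].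
  assert (P2 := P_v _ _ _ _ _ _ _ hX' hY PX' PY).
  apply (P_ext _ _ _ _ _ _ P2). unfold Mceq in *.
  tr (cv (cv Z X) X').
  tr (cv Z (cv X X')).
  tr (cv Z (cid w)).
  dstep.
Qed.

Lemma P_h a b c f f' g g' al be : T a b al f f' -> T b c be g g' ->
  Pk a b f f' al -> Pk b c g g' be -> Pk a c (wcomp g f) (wcomp g' f') (ch be al).
Proof.
  intros ha hb [Ef Kf] [Eg Kg]. split. simpl; congruence.
  intros z N hN. rewrite !k_comp. simpl edges. rewrite nfapp_app. rewrite <- Ef.
  assert (hf : WT f a b) by ty. assert (hf' : WT f' a b) by ty.
  assert (hg : WT g b c) by ty. assert (hg' : WT g' b c) by ty.
  assert (hM : WT (nfapp (edges f) N) z b) by (eapply edges_ty; eauto).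
  specialize (Kf z N hN). specialize (Kg z _ hM).
  unfold Mceq in *.
  assert (tkf' : T z b (k f' N) (wcomp f' N) (nfapp (edges f) N)) by (rewrite Ef; eapply k_ty; eauto).
  assert (tkg' : T z c (k g' (nfapp (edges f) N)) (wcomp g' (nfapp (edges f) N)) (nfapp (edges g) (nfapp (edges f) N))) by (rewrite Eg; eapply k_ty; eauto).
  assert (tkf : T z b (k f N) (wcomp f N) (nfapp (edges f) N)) by (eapply k_ty; eauto).
  unfold Mcty in tkf', tkg', tkf.
  set (M0 := nfapp (edges f) N) in *.
  tr (cv (k g' M0) (cv (cv (ch (cid g') (k f' N)) (ca g' f' N)) (ch (ch be al) (cid N)))).
  tr (cv (k g' M0) (cv (ch (cid g') (k f' N)) (cv (ca g' f' N) (ch (ch be al) (cid N))))).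
  tr (cv (k g' M0) (cv (ch (cid g') (k f' N)) (cv (ch be (ch al (cid N))) (ca g f N)))).
  tr (cv (k g' M0) (cv (cv (ch (cid g') (k f' N)) (ch be (ch al (cid N)))) (ca g f N))).
  tr (cv (k g' M0) (cv (ch (cv (cid g') be) (cv (k f' N) (ch al (cid N)))) (ca g f N))).
  tr (cv (k g' M0) (cv (ch be (cv (k f' N) (ch al (cid N)))) (ca g f N))).
  tr (cv (k g' M0) (cv (ch be (k f N)) (ca g f N))).
  tr (cv (k g' M0) (cv (cv (ch be (cid M0)) (ch (cid g) (k f N))) (ca g f N))).
  tr (cv (k g' M0) (cv (ch be (cid M0)) (cv (ch (cid g) (k f N)) (ca g f N)))).
  tr (cv (cv (k g' M0) (ch be (cid M0))) (cv (ch (cid g) (k f N)) (ca g f N))).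
  dstep.
Qed.


Lemma k_wid a N : k (wid a) N = cl N.
Proof. reflexivity. Qed.

Lemma P_a a b c d h g f : WT f a b -> WT g b c -> WT h c d ->
  Pk a d (wcomp (wcomp h g) f) (wcomp h (wcomp g f)) (ca h g f).
Proof.
  intros hf hg hh. split. simpl; rewrite app_assoc; auto.
  intros z N hN. rewrite !k_comp. simpl edges. rewrite !nfapp_app.
  assert (t1 : WT (nfapp (edges f) N) z b) by (eapply edges_ty; eauto).
  assert (t2 : WT (nfapp (edges g) (nfapp (edges f) N)) z c) by (eapply edges_ty; eauto).
  set (Nf := nfapp (edges f) N) in *. set (Ngf := nfapp (edges g) Nf) in *.
  unfold Mceq.
  tr (cv (k h Ngf) (cv (cv (ch (cid h) (cv (k g Nf) (cv (ch (cid g) (k f N)) (ca g f N)))) (ca h (wcomp g f) N)) (ch (ca h g f) (cid N)))).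
  tr (cv (k h Ngf) (cv (ch (cid h) (cv (k g Nf) (cv (ch (cid g) (k f N)) (ca g f N)))) (cv (ca h (wcomp g f) N) (ch (ca h g f) (cid N))))).
  tr (cv (k h Ngf) (cv (cv (ch (cid h) (k g Nf)) (ch (cid h) (cv (ch (cid g) (k f N)) (ca g f N)))) (cv (ca h (wcomp g f) N) (ch (ca h g f) (cid N))))).
  tr (cv (k h Ngf) (cv (cv (ch (cid h) (k g Nf)) (cv (ch (cid h) (ch (cid g) (k f N))) (ch (cid h) (ca g f N)))) (cv (ca h (wcomp g f) N) (ch (ca h g f) (cid N))))).
  tr (cv (k h Ngf) (cv (ch (cid h) (k g Nf)) (cv (cv (ch (cid h) (ch (cid g) (k f N))) (ch (cid h) (ca g f N))) (cv (ca h (wcomp g f) N) (ch (ca h g f) (cid N)))))).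
  tr (cv (k h Ngf) (cv (ch (cid h) (k g Nf)) (cv (ch (cid h) (ch (cid g) (k f N))) (cv (ch (cid h) (ca g f N)) (cv (ca h (wcomp g f) N) (ch (ca h g f) (cid N))))))).
  tr (cv (k h Ngf) (cv (ch (cid h) (k g Nf)) (cv (ch (cid h) (ch (cid g) (k f N))) (cv (ca h g (wcomp f N)) (ca (wcomp h g) f N))))).
  tr (cv (k h Ngf) (cv (ch (cid h) (k g Nf)) (cv (cv (ch (cid h) (ch (cid g) (k f N))) (ca h g (wcomp f N))) (ca (wcomp h g) f N)))).
  tr (cv (k h Ngf) (cv (ch (cid h) (k g Nf)) (cv (cv (ca h g Nf) (ch (ch (cid h) (cid g)) (k f N))) (ca (wcomp h g) f N)))).
  tr (cv (k h Ngf) (cv (ch (cid h) (k g Nf)) (cv (cv (ca h g Nf) (ch (cid (wcomp h g)) (k f N))) (ca (wcomp h g) f N)))).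
  tr (cv (k h Ngf) (cv (ch (cid h) (k g Nf)) (cv (ca h g Nf) (cv (ch (cid (wcomp h g)) (k f N)) (ca (wcomp h g) f N))))).
  tr (cv (k h Ngf) (cv (cv (ch (cid h) (k g Nf)) (ca h g Nf)) (cv (ch (cid (wcomp h g)) (k f N)) (ca (wcomp h g) f N)))).
  dstep.
Qed.

Lemma P_l a b f : WT f a b -> Pk a b (wcomp (wid b) f) f (cl f).
Proof.
  intros hf. split. reflexivity.
  intros z N hN. rewrite k_comp, k_wid. simpl edges.
  assert (t1 : WT (nfapp (edges f) N) z b) by (eapply edges_ty; eauto).
  unfold Mceq.
  tr (cv (k f N) (cv (cl (wcomp f N)) (ca (wid b) f N))).
  tr (cv (cv (k f N) (cl (wcomp f N))) (ca (wid b) f N)).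
  tr (cv (cv (cl (nfapp (edges f) N)) (ch (cid (wid b)) (k f N))) (ca (wid b) f N)).
  dstep.
Qed.

Lemma P_r a b f : WT f a b -> Pk a b (wcomp f (wid a)) f (cr f).
Proof.
  intros hf. split. simpl; rewrite app_nil_r; auto.
  intros z N hN. rewrite k_comp, k_wid. simpl edges. rewrite app_nil_r. simpl nfapp.
  unfold Mceq.
  dstep.
Qed.


Ltac relL := first [
   eapply R_resp; eassumption | eapply R_id | eapply R_v | eapply R_nat
 | eapply R_C_inv1 | eapply R_C_inv2 | eapply R_U_inv1 | eapply R_U_inv2
 | eapply R_assoc | eapply R_lunit | eapply R_runit ].
Ltac leaf_extra ::= first [ solve [eapply K1M; ty] | solve [apply E_sym; eapply K1M; ty]
 | solve [eapply ceq_rel; [relL; ty | ty | ty]]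
 | solve [apply E_sym; eapply ceq_rel; [relL; ty | ty | ty]] ].

Lemma edges_Pcomp g f : edges (Pw H (wcomp g f)) = edges (wcomp (Pw H g) (Pw H f)).
Proof. change (edges (Pw H (wcomp g f))) with (map (hE H) (gedges g ++ gedges f)). change (edges (wcomp (Pw H g) (Pw H f))) with (edges (Pw H g) ++ edges (Pw H f)). rewrite !edges_Pw, map_app; reflexivity. Qed.

Lemma P_YCi a b c g f : FWT f a b -> FWT g b c ->
  Pk (hV H a) (hV H c) (Pw H (wcomp g f)) (wcomp (Pw H g) (Pw H f)) (cgen (YCi g f)).
Proof.
  intros hf hg. split. apply edges_Pcomp.
  intros z N hN. rewrite edges_Pcomp, k_Pw, kG_comp. unfold Mceq. apply E_refl. ty.
Qed.

Lemma P_YUi a : Pk (hV H a) (hV H a) (Pw H (wid a)) (wid (hV H a)) (cgen (YUi G a)).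
Proof.
  split. reflexivity. intros z N hN. unfold Mceq. apply E_refl. try rewrite k_wid. ty.
Qed.

Lemma isinv_YC a b c g f : FWT f a b -> FWT g b c ->
  @isinv _ _ _ (Mxty H) (Myty H) (Mrel H) (hV H a) (hV H c)
    (wcomp (Pw H g) (Pw H f)) (Pw H (wcomp g f)) (cgen (YC g f)) (cgen (YCi g f)).
Proof. intros; unfold isinv; repeat split; try solve [ty]; leaf. Qed.

Lemma isinv_YU a :
  @isinv _ _ _ (Mxty H) (Myty H) (Mrel H) (hV H a) (hV H a)
    (wid (hV H a)) (Pw H (wid a)) (cgen (YU G a)) (cgen (YUi G a)).
Proof. intros; unfold isinv; repeat split; try solve [ty]; leaf. Qed.

Lemma P_YC a b c g f : FWT f a b -> FWT g b c ->
  Pk (hV H a) (hV H c) (wcomp (Pw H g) (Pw H f)) (Pw H (wcomp g f)) (cgen (YC g f)).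
Proof.
  intros hf hg. apply (P_inv _ _ _ _ _ _ (isinv_sym _ _ _ _ _ _ _ _ _ _ _ _ (isinv_YC _ _ _ _ _ hf hg))).
  apply (P_YCi _ _ _ _ _ hf hg).
Qed.

Lemma P_YU a : Pk (hV H a) (hV H a) (wid (hV H a)) (Pw H (wid a)) (cgen (YU G a)).
Proof.
  apply (P_inv _ _ _ _ _ _ (isinv_sym _ _ _ _ _ _ _ _ _ _ _ _ (isinv_YU a))).
  apply P_YUi.
Qed.


Ltac pk := repeat first [ solve [ty] | eassumption | match goal with
 | |- Pk _ _ _ _ (cid _) => eapply P_id
 | |- Pk _ _ _ _ (cv _ _) => eapply P_v
 | |- Pk _ _ _ _ (ch _ _) => eapply P_h
 | |- Pk _ _ _ _ (ca _ _ _) => eapply P_a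
 | |- Pk _ _ _ _ (cl _) => eapply P_l
 | |- Pk _ _ _ _ (cr _) => eapply P_r
 | |- Pk _ _ _ _ (cgen (YC _ _)) => eapply P_YC
 | |- Pk _ _ _ _ (cgen (YCi _ _)) => eapply P_YCi
 | |- Pk _ _ _ _ (cgen (YU _ _)) => eapply P_YU
 | |- Pk _ _ _ _ (cgen (YUi _ _)) => eapply P_YUi
 end ].

Ltac inv := repeat first [ solve [ty] | match goal with
 | |- isinv _ _ _ _ _ _ _ _ _ _ (cid _) _ => eapply isinv_cid
 | |- isinv _ _ _ _ _ _ _ _ _ _ (cv _ _) _ => eapply isinv_v
 | |- isinv _ _ _ _ _ _ _ _ _ _ (ch _ _) _ => eapply isinv_h
 | |- isinv _ _ _ _ _ _ _ _ _ _ (cgen (YC _ _)) _ => eapply isinv_YC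
 | |- isinv _ _ _ _ _ _ _ _ _ _ (cgen (YU _ _)) _ => eapply isinv_YU
 end ].

Definition FI := @isinv _ _ _ (Fxty G) (@Fyty G) (@Frel G).
Definition MI := @isinv _ _ _ (Mxty H) (Myty H) (Mrel H).

Lemma Phi_isinv a b s t al al' : FI a b s t al al' ->
  MI (hV H a) (hV H b) (Pw H s) (Pw H t) (cgen (YPhi al)) (cgen (YPhi al')).
Proof.
  intros [t1 [t2 [e1 e2]]]. repeat split; try solve [ty].
  - tr (@cgen (V M) (gen1 G M) (gen2 G) (YPhi (cv al' al))). tr (@cgen (V M) (gen1 G M) (gen2 G) (YPhi (cid s))). dstep.
  - tr (@cgen (V M) (gen1 G M) (gen2 G) (YPhi (cv al al'))). tr (@cgen (V M) (gen1 G M) (gen2 G) (YPhi (cid t))). dstep.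
Qed.

Lemma Phi_ca a b c d h g f : FWT f a b -> FWT g b c -> FWT h c d ->
  Pk (hV H a) (hV H d) (Pw H (wcomp (wcomp h g) f)) (Pw H (wcomp h (wcomp g f)))
     (cgen (YPhi (ca h g f))).
Proof.
  intros hf hg hh.
  apply P_cancel with (u := wcomp (wcomp (Pw H h) (Pw H g)) (Pw H f))
    (X := cv (cgen (YC (wcomp h g) f)) (ch (cgen (YC h g)) (cid (Pw H f))))
    (X' := cv (ch (cgen (YCi h g)) (cid (Pw H f))) (cgen (YCi (wcomp h g) f)))
    (Y := cv (cgen (YC h (wcomp g f))) (cv (ch (cid (Pw H h)) (cgen (YC g f))) (ca (Pw H h) (Pw H g) (Pw H f)))).
  - inv.
  - ty.
  - ty.
  - unfold Mceq. dstep.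
  - pk.
  - pk.
Qed.


Local Notation Phi al := (@cgen (V M) (gen1 G M) (gen2 G) (YPhi al)).

Lemma Phi_cl a b f : FWT f a b ->
  Pk (hV H a) (hV H b) (Pw H (wcomp (wid b) f)) (Pw H f) (Phi (cl f)).
Proof.
  intros hf.
  apply P_cancel with (u := wcomp (wid (hV H b)) (Pw H f))
    (X := cv (cgen (YC (wid b) f)) (ch (cgen (YU G b)) (cid (Pw H f))))
    (X' := cv (ch (cgen (YUi G b)) (cid (Pw H f))) (cgen (YCi (wid b) f)))
    (Y := cl (Pw H f)).
  - inv.
  - ty.
  - ty.
  - unfold Mceq. dstep.
  - pk.
  - pk.
Qed.

Lemma Phi_cr a b f : FWT f a b ->
  Pk (hV H a) (hV H b) (Pw H (wcomp f (wid a))) (Pw H f) (Phi (cr f)).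
Proof.
  intros hf.
  apply P_cancel with (u := wcomp (Pw H f) (wid (hV H a)))
    (X := cv (cgen (YC f (wid a))) (ch (cid (Pw H f)) (cgen (YU G a))))
    (X' := cv (ch (cid (Pw H f)) (cgen (YUi G a))) (cgen (YCi f (wid a))))
    (Y := cr (Pw H f)).
  - inv.
  - ty.
  - ty.
  - unfold Mceq. dstep.
  - pk.
  - pk.
Qed.

Lemma Phi_ch a b c f f' g g' al be : FT a b al f f' -> FT b c be g g' ->
  Pk (hV H a) (hV H b) (Pw H f) (Pw H f') (Phi al) ->
  Pk (hV H b) (hV H c) (Pw H g) (Pw H g') (Phi be) ->
  Pk (hV H a) (hV H c) (Pw H (wcomp g f)) (Pw H (wcomp g' f')) (Phi (ch be al)).
Proof.
  intros ha hb Pa Pb.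
  assert (hf : FWT f a b) by ty. assert (hf' : FWT f' a b) by ty.
  assert (hg : FWT g b c) by ty. assert (hg' : FWT g' b c) by ty.
  apply P_cancel with (u := wcomp (Pw H g) (Pw H f))
    (X := cgen (YC g f)) (X' := cgen (YCi g f))
    (Y := cv (cgen (YC g' f')) (ch (Phi be) (Phi al))).
  - inv.
  - ty.
  - ty.
  - unfold Mceq. dstep.
  - pk.
  - pk.
Qed.


Lemma FI_cl a b f : FWT f a b -> FI a b (wcomp (wid b) f) f (cl f) (cli f).
Proof. intros; unfold FI, isinv; repeat split; try solve [ty]; leaf. Qed.
Lemma FI_cr a b f : FWT f a b -> FI a b (wcomp f (wid a)) f (cr f) (cri f).
Proof. intros; unfold FI, isinv; repeat split; try solve [ty]; leaf. Qed.
Lemma FI_ca a b c d h g f : FWT f a b -> FWT g b c -> FWT h c d ->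
  FI a d (wcomp (wcomp h g) f) (wcomp h (wcomp g f)) (ca h g f) (cai h g f).
Proof. intros; unfold FI, isinv; repeat split; try solve [ty]; leaf. Qed.
Lemma MI_cl a b f : WT f a b -> MI a b (wcomp (wid b) f) f (cl f) (cli f).
Proof. intros; unfold MI, isinv; repeat split; try solve [ty]; leaf. Qed.
Lemma MI_cr a b f : WT f a b -> MI a b (wcomp f (wid a)) f (cr f) (cri f).
Proof. intros; unfold MI, isinv; repeat split; try solve [ty]; leaf. Qed.
Lemma MI_ca a b c d h g f : WT f a b -> WT g b c -> WT h c d ->
  MI a d (wcomp (wcomp h g) f) (wcomp h (wcomp g f)) (ca h g f) (cai h g f).
Proof. intros; unfold MI, isinv; repeat split; try solve [ty]; leaf. Qed.

Lemma Phi_main a b al s t : FT a b al s t -> Pk (hV H a) (hV H b) (Pw H s) (Pw H t) (Phi al).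
Proof.
  unfold fcty; induction 1.
  - eapply P_ext. eapply P_id; ty. unfold Mceq; dstep.
  - apply P_ext with (al := cv (Phi be) (Phi al)). eapply P_v; [ty|ty|eassumption|eassumption]. unfold Mceq; dstep.
  - eapply Phi_ch; eauto.
  - eapply Phi_ca; eauto.
  - eapply P_inv. apply Phi_isinv. eapply FI_ca; eauto. eapply Phi_ca; eauto.
  - eapply Phi_cl; eauto.
  - eapply P_inv. apply Phi_isinv. eapply FI_cl; eauto. eapply Phi_cl; eauto.
  - eapply Phi_cr; eauto.
  - eapply P_inv. apply Phi_isinv. eapply FI_cr; eauto. eapply Phi_cr; eauto.
  - destruct y.
Qed.

Lemma main_P x y al u v : T x y al u v -> Pk x y u v al.
Proof.
  unfold Mcty; induction 1.
  - apply P_id; auto.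
  - eapply P_v; eauto.
  - eapply P_h; eauto.
  - eapply P_a; eauto.
  - eapply P_inv. eapply MI_ca; eauto. eapply P_a; eauto.
  - eapply P_l; eauto.
  - eapply P_inv. eapply MI_cl; eauto. eapply P_l; eauto.
  - eapply P_r; eauto.
  - eapply P_inv. eapply MI_cr; eauto. eapply P_r; eauto.
  - destruct H0.
    + apply Phi_main; auto.
    + eapply P_YC; eauto.
    + eapply P_YCi; eauto.
    + apply P_YU.
    + apply P_YUi.
Qed.

Lemma F_gen_inv : forall (y : Empty_set) a b (s t : FW G), @Fyty G y a b s t ->
  exists y', FI a b s t (cgen y) y'.
Proof. intros []. Qed.

Lemma M_gen_inv : forall y a b s t, Myty H y a b s t -> exists y', MI a b s t (cgen y) y'.
Proof.
  intros y a b s t h; destruct h.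
  - destruct (all_inv _ _ _ _ _ _ Fyty_wty F_gen_inv _ _ _ _ _ H0) as [al' hi].
    eexists. apply Phi_isinv. exact hi.
  - eexists. eapply isinv_YC; eauto.
  - eexists. eapply isinv_sym. eapply isinv_YC; eauto.
  - eexists. eapply isinv_YU.
  - eexists. eapply isinv_sym. eapply isinv_YU.
Qed.

Lemma faithful_r a b f f' al be : T a b al f f' -> T a b be f f' ->
  EQ a b (wcomp f (wid a)) (wcomp f' (wid a)) (ch al (cid (wid a))) (ch be (cid (wid a))) ->
  EQ a b f f' al be.
Proof.
  intros ha hb e. unfold Mceq, Mcty in *.
  tr (cv al (cid f)).
  tr (cv al (cv (cr f) (cri f))).
  tr (cv (cv al (cr f)) (cri f)).
  tr (cv (cv (cr f') (ch al (cid (wid a)))) (cri f)).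
  tr (cv (cv (cr f') (ch be (cid (wid a)))) (cri f)).
  tr (cv (cv be (cr f)) (cri f)).
  tr (cv be (cv (cr f) (cri f))).
  tr (cv be (cid f)).
  dstep.
Qed.

Lemma thin x y : Mhom_thin H x y.
Proof.
  unfold Mhom_thin. intros u v al be ha hb.
  destruct (main_P _ _ _ _ _ ha) as [E Ka].
  destruct (main_P _ _ _ _ _ hb) as [_ Kb].
  assert (hx : WT (wid x) x x) by constructor.
  specialize (Ka x (wid x) hx). specialize (Kb x (wid x) hx).
  assert (hv : WT v x y) by ty.
  assert (tk : T x y (k v (wid x)) (wcomp v (wid x)) (nfapp (edges v) (wid x))) by (eapply k_ty; eauto).
  destruct (all_inv _ _ _ _ _ _ Myty_wty M_gen_inv _ _ _ _ _ tk) as [kv' hi].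
  apply faithful_r; [exact ha|exact hb|].
  rewrite E in Ka, Kb.
  eapply cancel_l. exact hi. 1,2: ty.
  eapply E_trans. exact Ka. apply E_sym. exact Kb.
Qed.

End MM.


Theorem mainTheorem11 (G M : graph) (H : gmap G M) (x y : V M) :
  Mhom_thin H x y.
Proof. exact (thin G M H x y). Qed.
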